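(* Let $\varphi:X\to\mathbb R$ be Lipschitz continuous. If $\underline{x}\in\Omega_\varphi$, then the sequence $\left\{\sum_{i=0}^{n-1}\big(\varphi(\sigma^i\underline{x})-\alpha_\varphi\big)\right\}_{n\in\mathbb N_0}$ is bounded.
   Context: $X=[0,1]^{\mathbb N_0}$ with metric $d_X(\underline{x},\underline{y})=\sum_{i\ge0}|x_i-y_i|/2^{i+1}$ and shift $\sigma(\underline{x})_i=x_{i+1}$. $\alpha_\varphi=\inf_\mu\int\varphi\,d\mu$ over $\sigma$-invariant Borel probability measures. $B(\underline{x},\underline{y},n;\varepsilon)=\{\underline{z}: d_X(\underline{x},\underline{z})<\varepsilon,\ d_X(\sigma^n\underline{z},\underline{y})<\varepsilon\}$. Mañé potential $S_\varphi(\underline{x},\underline{y})=\lim_{\varepsilon\to0}\inf\{\sum_{i=0}^{n-1}(\varphi(\sigma^i\underline{z})-\alpha_\varphi): n\in\mathbb N,\ \underline{z}\in B(\underline{x},\underline{y},n;\varepsilon)\}$; Aubry set $\Omega_\varphi=\{\underline{x}: S_\varphi(\underline{x},\underline{x})=0\}$. *)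

(* Defs.v *)
From HB Require Import structures.
From mathcomp Require Import all_boot all_order all_algebra.
From mathcomp Require Import all_classical all_reals all_analysis.
Set Implicit Arguments. Unset Strict Implicit. Unset Printing Implicit Defensive.
Import Order.TTheory GRing.Theory Num.Theory.
Import numFieldNormedType.Exports.
Local Open Scope classical_set_scope.
Local Open Scope ring_scope.

Record Xsp (R : realType) := mkX {
  xval :> nat -> R ;
  xprop : forall i, 0 <= xval i <= 1 }.

HB.instance Definition _ (R : realType) := gen_eqMixin (Xsp R).
HB.instance Definition _ (R : realType) := gen_choiceMixin (Xsp R).
Lemma Xsp0_prop (R : realType) : forall i : nat, 0 <= (fun _ => 0 : R) i <= 1.
Proof. by move=> i; rewrite lexx ler01. Qed.
HB.instance Definition _ (R : realType) :=
  isPointed.Build (Xsp R) (@mkX R (fun _ => 0) (@Xsp0_prop R)).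

Definition dX (R : realType) (x y : Xsp R) : R :=
  limn (fun n => \sum_(i < n) (`|x i - y i| / 2 ^+ i.+1)).

Definition sshift (R : realType) (x : Xsp R) : Xsp R :=
  @mkX R (fun i => x i.+1) (fun i => xprop x i.+1).

Definition dX_open (R : realType) : set (set (Xsp R)) :=
  [set U | forall x, U x -> exists2 e : R, 0 < e & forall z, dX x z < e -> U z].

Definition XB (R : realType) := g_sigma_algebraType (@dX_open R).

Definition invariant (R : realType) (mu : probability (XB R) R) : Prop :=
  forall A : set (XB R), measurable A -> mu (@sshift R @^-1` A) = mu A.

Definition alpha (R : realType) (phi : Xsp R -> R) : R :=
  fine (ereal_inf [set (\int[mu]_x (phi x)%:E)%E
                   | mu in [set mu : probability (XB R) R | invariant mu]]).

Definition Bset (R : realType) (x y : Xsp R) (n : nat) (eps : R) : set (Xsp R) :=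
  [set z | dX x z < eps /\ dX (iter n (@sshift R) z) y < eps].

Definition birkhoff (R : realType) (phi : Xsp R -> R) (n : nat) (z : Xsp R) : R :=
  \sum_(0 <= i < n) (phi (iter i (@sshift R) z) - alpha phi).

Definition mane (R : realType) (phi : Xsp R -> R) (x y : Xsp R) : \bar R :=
  lim ((fun eps : R =>
          ereal_inf [set (birkhoff phi nz.1 nz.2)%:E
                    | nz in [set nz : nat * Xsp R | (0 < nz.1)%N /\ Bset x y nz.1 eps nz.2]])
        @ 0^'+).

Definition aubry (R : realType) (phi : Xsp R -> R) : set (Xsp R) :=
  [set x | mane phi x x = 0%E].

(* Main.v *)
Require Import Defs.
From HB Require Import structures.
From mathcomp Require Import all_boot all_order all_algebra.
From mathcomp Require Import all_classical all_reals all_analysis.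
From mathcomp Require Import ring lra.
Import Order.TTheory GRing.Theory Num.Theory.
Local Open Scope classical_set_scope.
Local Open Scope ring_scope.

Module Helpers.
Import numFieldNormedType.Exports.

Section S.
Variable R : realType.
Variable phi : Xsp R -> R.

Definition fe (x : Xsp R) (eps : R) : \bar R :=
  ereal_inf [set (birkhoff phi nz.1 nz.2)%:E
     | nz in [set nz : nat * Xsp R | (0 < nz.1)%N /\ Bset x x nz.1 eps nz.2]].

Lemma fe_noninc x : nonincreasing_fun (fe x).
Proof.
move=> e1 e2 le12; apply: le_ereal_inf => _ [[n z] /= [n0 [h1 h2]] <-].
exists (n, z) => //=; split => //; split; exact: (lt_le_trans _ le12).
Qed.

Lemma fe_cvg x : cvg (fe x e @[e --> 0^'+]).
Proof.
apply: nonincreasing_at_right_is_cvge; near=> e.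
move=> a b _ _; exact: fe_noninc.
Unshelve. all: by end_near. Qed.

Lemma aubry_le0 x : aubry phi x -> forall e, 0 < e -> (fe x e <= 0)%E.
Proof.
rewrite /aubry /mane /= => hx e e0.
rewrite -[X in (_ <= X)%E]hx -/(fe x).
apply: lime_ge; first exact: fe_cvg.
near=> e'. apply: fe_noninc. near: e'. exact: nbhs_right_le.
Unshelve. all: by end_near. Qed.

Lemma aubry_ge x : aubry phi x -> exists2 e, 0 < e & (-1 <= fe x e)%E.
Proof.
rewrite /aubry /mane /= => hx.
apply: contrapT => hn.
have : (lim (fe x e @[e --> 0^'+]) <= -1)%E.
  apply: lime_le; first exact: fe_cvg.
  near=> e. have e0 : 0 < e by near: e; exact: nbhs_right_gt.
  case: (boolP (-1 <= fe x e)%E) => h; first by exfalso; apply: hn; exists e.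
  by apply/ltW; move: h; rewrite leNgt negbK.
rewrite /fe in hx *; rewrite hx. by rewrite lee_fin; lra.
Unshelve. all: by end_near. Qed.
End S.

Set Implicit Arguments. Unset Strict Implicit.

Section D.
Variable R : realType.
Implicit Types a b c : Xsp R.

Definition S n a b : R := \sum_(i < n) (`|a i - b i| / 2 ^+ i.+1).

Lemma Xsp_ext a b : (forall j, a j = b j) -> a = b.
Proof.
case: a b => fa pa [fb pb] /= h.
have e : fa = fb by apply: funext.
subst; congr mkX; exact: Prop_irrelevance.
Qed.

Lemma coord_bound a b i : `|a i - b i| <= 1.
Proof.
have := xprop a i; have := xprop b i => /andP[? ?] /andP[? ?].
rewrite ler_norml; apply/andP; split; lra.
Qed.

Lemma S_rec n a b : S n.+1 a b = `|a 0%N - b 0%N| / 2 + S n (sshift a) (sshift b) / 2.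
Proof.
rewrite /S big_ord_recl /= expr1; congr (_ + _).
rewrite mulr_suml; apply: eq_bigr => i _ /=.
by rewrite exprS invfM mulrA mulrAC.
Qed.

Lemma S_ge0 n a b : 0 <= S n a b.
Proof. by apply: sumr_ge0 => i _; apply: divr_ge0. Qed.

Lemma S_le1 n a b : S n a b <= 1.
Proof.
elim: n a b => [|n IH] a b; first by rewrite /S big_ord0.
rewrite S_rec; have := IH (sshift a) (sshift b); have := coord_bound a b 0.
lra.
Qed.

Lemma S_nd a b : nondecreasing_seq (fun n => S n a b).
Proof.
apply/nondecreasing_seqP => n; rewrite /S big_ord_recr /= lerDl.
exact: divr_ge0.
Qed.

Lemma S_cvg a b : cvgn (fun n => S n a b).
Proof.
apply: nondecreasing_is_cvgn; first exact: S_nd.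
by exists 1 => _ [n _ <-]; exact: S_le1.
Qed.

Lemma S_le_dX n a b : S n a b <= dX a b.
Proof. exact: (nondecreasing_cvgn_le (@S_nd a b) (@S_cvg a b)). Qed.

Lemma dX_le a b B : (forall n, S n a b <= B) -> dX a b <= B.
Proof.
move=> h; apply: limr_le; first exact: S_cvg.
by near=> n; apply: h.
Unshelve. all: by end_near. Qed.

Lemma dX_ge0 a b : 0 <= dX a b.
Proof. exact: le_trans (S_ge0 0 a b) (S_le_dX 0 a b). Qed.

Lemma dX_le1 a b : dX a b <= 1.
Proof. apply: dX_le => n; exact: S_le1. Qed.

Lemma dX_sym a b : dX a b = dX b a.
Proof. by rewrite /dX; congr (limn _); apply: funext => n; apply: eq_bigr => i _; rewrite distrC. Qed.

Lemma dX_tri a b c : dX a c <= dX a b + dX b c.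
Proof.
apply: dX_le => n; apply: le_trans (lerD (S_le_dX n a b) (S_le_dX n b c)).
rewrite /S -big_split /=; apply: ler_sum => i _.
rewrite -mulrDl ler_wpM2r ?invr_ge0 ?exprn_ge0 //.
have -> : a i - c i = (a i - b i) + (b i - c i) by ring.
exact: ler_normD.
Qed.

Lemma dX_self a b : (forall j, a j = b j) -> dX a b = 0.
Proof.
move=> h; apply/eqP; rewrite eq_le dX_ge0 andbT; apply: dX_le => n.
by rewrite /S big1 // => i _; rewrite h subrr normr0 mul0r.
Qed.

Lemma dX_step a b : dX a b <= `|a 0%N - b 0%N| / 2 + dX (sshift a) (sshift b) / 2.
Proof.
apply: dX_le => n; have h1 : S n a b <= S n.+1 a b by apply: (S_nd a b); rewrite leqnSn.
apply: (le_trans h1).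
rewrite S_rec lerD2l ler_wpM2r //; exact: S_le_dX.
Qed.

Lemma dX_shift a b : dX (sshift a) (sshift b) <= 2 * dX a b.
Proof.
apply: dX_le => n; have := S_le_dX n.+1 a b; rewrite S_rec.
have := normr_ge0 (a 0%N - b 0%N); lra.
Qed.

Lemma dX_iter i a b : dX (iter i (@sshift R) a) (iter i (@sshift R) b) <= 2 ^+ i * dX a b.
Proof.
elim: i => [|i IH] /=; first by rewrite expr0 mul1r.
apply: le_trans (dX_shift _ _) _; rewrite exprS -mulrA ler_pM2l //.
Qed.

Lemma dX_agree N a b : (forall j, (j < N)%N -> a j = b j) ->
  dX a b <= (2 ^+ N)^-1 * dX (iter N (@sshift R) a) (iter N (@sshift R) b).
Proof.
elim: N a b => [|N IH] a b h; first by rewrite expr0 invr1 mul1r.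
apply: le_trans (dX_step a b) _.
rewrite h // subrr normr0 mul0r add0r.
have h' : forall j, (j < N)%N -> sshift a j = sshift b j by move=> j jN; apply: h.
apply: le_trans (ler_wpM2r _ (IH _ _ h')) _; first by [].
rewrite -!iterSr exprS invfM; lra.
Qed.

Lemma iter_coord i a j : iter i (@sshift R) a j = a (j + i)%N.
Proof. by elim: i a j => [|i IH] a j /=; [rewrite addn0 | rewrite IH addnS]. Qed.

End D.

Section B.
Variable R : realType.
Variable phi : Xsp R -> R.
Implicit Types a b c : Xsp R.
Local Notation sh := (@sshift R).
Local Notation A := (birkhoff phi).

Lemma A_add n m a : A (n + m) a = A n a + A m (iter n sh a).
Proof.
rewrite /birkhoff (big_cat_nat (n := n)) ?leq_addr //=; congr (_ + _).
rewrite -{1}(add0n n) big_addn; rewrite [X in \sum_(0 <= _ < X) _](_ : _ = m) ?addKn //.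
apply: eq_bigr => i _.
by rewrite iterD.
Qed.

Lemma A_lip L n a b : (forall x y, `|phi x - phi y| <= L * dX x y) ->
  A n a <= A n b + L * \sum_(0 <= i < n) dX (iter i sh a) (iter i sh b).
Proof.
move=> hL; rewrite /birkhoff mulr_sumr -big_split /=; apply: ler_sum => i _.
have := hL (iter i sh a) (iter i sh b); rewrite ler_norml => /andP[_ h]; lra.
Qed.

Lemma sum_agree k a b : (forall j, (j < k)%N -> a j = b j) ->
  \sum_(0 <= i < k) dX (iter i sh a) (iter i sh b) <=
  (1 - (2 ^+ k)^-1) * dX (iter k sh a) (iter k sh b).
Proof.
elim: k a b => [|k IH] a b h; first by rewrite big_geq // expr0 invr1 subrr mul0r.
rewrite big_nat_recl //=.
have h' : forall j, (j < k)%N -> sh a j = sh b j by move=> j jk; apply: h.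
have h1 := IH _ _ h'; rewrite /=.
have -> : \sum_(0 <= i < k) dX (sh (iter i sh a)) (sh (iter i sh b)) =
   \sum_(0 <= i < k) dX (iter i sh (sh a)) (iter i sh (sh b)).
  by apply: eq_bigr => i _; rewrite -!iterSr.
rewrite -!iterSr in h1.
change (sh (iter k sh a)) with (iter k.+1 sh a).
change (sh (iter k sh b)) with (iter k.+1 sh b).
have h2 := dX_agree h.
have := dX_ge0 (iter k.+1 sh a) (iter k.+1 sh b).
set T := dX (iter k.+1 sh a) (iter k.+1 sh b) in h1 h2 *.
rewrite exprS invfM in h2 *.
have : 0 < (2 ^+ k)^-1 :> R by rewrite invr_gt0 exprn_gt0.
move: h1 h2; set u := (2 ^+ k)^-1; set d0 := dX a b; set s := \sum_(_ <= _ < _) _.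
nra.
Qed.

Lemma sum_agree1 k a b : (forall j, (j < k)%N -> a j = b j) ->
  \sum_(0 <= i < k) dX (iter i sh a) (iter i sh b) <= dX (iter k sh a) (iter k sh b).
Proof.
move=> h; apply: le_trans (sum_agree h) _.
have := dX_ge0 (iter k sh a) (iter k sh b).
have : 0 < (2 ^+ k)^-1 :> R by rewrite invr_gt0 exprn_gt0.
set u := (2 ^+ k)^-1; set T := dX _ _; nra.
Qed.

Definition pre N a b : Xsp R :=
  @mkX R (fun j => if (j < N)%N then a j else b (j - N)%N)
    (fun j => if (j < N)%N as t return (0 <= (if t then a j else b (j - N)%N) <= 1)
              then xprop a j else xprop b (j - N)%N).

Lemma iter_pre N a b : iter N sh (pre N a b) = b.
Proof.
apply: Xsp_ext => j; rewrite iter_coord /= ltnNge leq_addl /=.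
by rewrite addnK.
Qed.

Lemma pre_agree N a b j : (j < N)%N -> pre N a b j = a j.
Proof. by move=> /= ->. Qed.

End B.

Lemma pow2_small (R : realType) (e : R) : 0 < e ->
  exists N : nat, (0 < N)%N /\ (2 ^+ N)^-1 < e.
Proof.
move=> e0; exists (Num.truncn e^-1).+1; split => //.
have h1 := truncnS_gt e^-1.
have h2 : ((Num.truncn e^-1).+1%:R : R) <= 2 ^+ (Num.truncn e^-1).+1.
  rewrite -natrX ler_nat; apply: ltnW; exact: ltn_expl.
have h3 : e^-1 < 2 ^+ (Num.truncn e^-1).+1 := lt_le_trans h1 h2.
have p : 0 < 2 ^+ (Num.truncn e^-1).+1 :> R by rewrite exprn_gt0.
rewrite -(mul1r (_^-1)) ltr_pdivrMr //.
by rewrite -ltr_pdivrMl // mulr1.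
Qed.

Lemma sum_le1 (R : realType) (N : nat) (F : nat -> R) : (forall i, F i <= 1) ->
  \sum_(0 <= i < N) F i <= N%:R.
Proof.
move=> h; apply: le_trans (ler_sum _ (fun i _ => h i)) _.
by rewrite sumr_const_nat subn0.
Qed.

Section LB.
Variable R : realType.
Variable phi : Xsp R -> R.
Variable L : R.
Hypothesis L0 : 0 <= L.
Hypothesis hL : forall x y, `|phi x - phi y| <= L * dX x y.
Variable x : Xsp R.
Variable e0 : R.
Hypothesis hlow : forall m z, (0 < m)%N -> dX x z < e0 -> dX (iter m (@sshift R) z) x < e0 ->
  -1 <= birkhoff phi m z.
Local Notation sh := (@sshift R).
Local Notation A := (birkhoff phi).

Hypothesis e0p : 0 < e0.

Definition V k y r := iter r (pre k y) x.

Lemma iterV k y r : iter k sh (V k y r.+1) = V k y r.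
Proof. by rewrite /V iterS iter_pre. Qed.

Lemma iterV_all k y r : iter (r * k) sh (V k y r) = x.
Proof.
elim: r => [|r IH]; first by rewrite mul0n.
by rewrite mulSnr iterD iterV.
Qed.

Lemma blockV k y r : A k (V k y r.+1) <= A k y + L.
Proof.
apply: le_trans (A_lip k (V k y r.+1) y hL) _; rewrite lerD2l.
rewrite -[X in _ <= X]mulr1 ler_wpM2l //.
have hag : forall j, (j < k)%N -> V k y r.+1 j = y j.
  by move=> j jk; rewrite /V iterS pre_agree.
apply: le_trans (sum_agree1 hag) _; exact: dX_le1.
Qed.

Lemma sumV k y r : A (r * k) (V k y r) <= r%:R * (A k y + L).
Proof.
elim: r => [|r IH]; first by rewrite mul0n mul0r /birkhoff big_geq.
rewrite mulSn A_add iterV.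
have := blockV k y r; rewrite -nat1r; lra.
Qed.

Lemma LB_all k y : - L <= A k y.
Proof.
rewrite leNgt; apply/negP => hlt.
have [N [N0 hN]] := pow2_small e0p.
set C := A N x + L * N%:R + 1.
set be := - (A k y + L).
have be0 : 0 < be by rewrite /be; lra.
have key : forall r : nat, - 1 <= C - 1 - r%:R * be.
  move=> r; set w := pre N x (V k y r).
  have hm : (0 < r * k + N)%N by rewrite addn_gt0 N0 orbT.
  have h1 : dX x w < e0.
    apply: le_lt_trans (dX_agree (N:=N) _) _.
      by move=> j jN; rewrite /w pre_agree.
    apply: le_lt_trans hN; rewrite -[X in _ <= X]mulr1 ler_wpM2l ?dX_le1 //.
  have h2 : dX (iter (r * k + N) sh w) x < e0.
    by rewrite iterD /w iter_pre iterV_all (dX_self (fun j => erefl)).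
  have := hlow hm h1 h2.
  rewrite addnC A_add /w iter_pre.
  have h3 : A N (pre N x (V k y r)) <= A N x + L * N%:R.
    apply: le_trans (A_lip N _ x hL) _; rewrite lerD2l ler_wpM2l //.
    apply: sum_le1 => i; exact: dX_le1.
  have h4 := sumV k y r.
  rewrite /C /be; lra.
have [r hr] : exists r : nat, C < r%:R * be.
  exists (Num.truncn (C / be)).+1.
  by rewrite -ltr_pdivrMr //; exact: truncnS_gt.
have := key r; lra.
Qed.
End LB.

Lemma inv2m (R : realType) m : (0 < m)%N -> (2 ^+ m)^-1 <= 2^-1 :> R.
Proof.
case: m => // m _; rewrite exprS invfM.
have h : (2 ^+ m)^-1 <= 1 :> R by rewrite invf_le1 ?exprn_gt0 // exprn_ege1 // ler1n.
have : 0 <= (2 ^+ m)^-1 :> R by rewrite invr_ge0 exprn_ge0.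
lra.
Qed.

Section UB.
Variable R : realType.
Variable phi : Xsp R -> R.
Variable L : R.
Hypothesis L0 : 0 <= L.
Hypothesis hL : forall x y, `|phi x - phi y| <= L * dX x y.
Variable x : Xsp R.
Local Notation sh := (@sshift R).
Local Notation A := (birkhoff phi).
Hypothesis LB : forall k y, - L <= A k y.

Variables (m : nat) (z : Xsp R) (eps : R).
Hypothesis m0 : (0 < m)%N.
Hypothesis hz1 : dX x z < eps.
Hypothesis hz2 : dX (iter m sh z) x < eps.

Definition U r := iter r (pre m z) x.

Lemma iterU r : iter m sh (U r.+1) = U r.
Proof. by rewrite /U iterS iter_pre. Qed.

Lemma agreeU r j : (j < m)%N -> U r.+1 j = z j.
Proof. by move=> jm; rewrite /U iterS pre_agree. Qed.

Lemma DU r : dX (U r) x <= 3 * eps.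
Proof.
have e0 : 0 < eps := le_lt_trans (dX_ge0 _ _) hz1.
elim: r => [|r IH]; first by rewrite /U /= (dX_self (fun j => erefl)); lra.
apply: le_trans (dX_tri _ z _) _.
have h1 := dX_agree (agreeU r).
rewrite iterU in h1.
have h2 := dX_tri (U r) x (iter m sh z).
have h3 := inv2m R m0.
have h4 : 0 <= dX (U r) (iter m sh z) := dX_ge0 _ _.
have hz1' := hz1; rewrite dX_sym in hz1'; rewrite (dX_sym x) in h2.
have h5 : (2 ^+ m)^-1 * dX (U r) (iter m sh z) <= 2^-1 * dX (U r) (iter m sh z).
  by rewrite ler_wpM2r.
have h6 : 2^-1 * dX (U r) (iter m sh z) = dX (U r) (iter m sh z) / 2 by rewrite mulrC.
rewrite h6 in h5.
move: h5 h1 h2 hz1' IH hz2; set a := dX (U r) (iter m sh z); set b := 2 ^- m * a.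
lra.
Qed.

Lemma blockU r : A m (U r.+1) <= A m z + L * (4 * eps).
Proof.
apply: le_trans (A_lip m (U r.+1) z hL) _; rewrite lerD2l ler_wpM2l //.
apply: le_trans (sum_agree1 (agreeU r)) _.
rewrite iterU; apply: le_trans (dX_tri _ x _) _.
have := DU r; have hz2' := hz2; rewrite dX_sym in hz2'; lra.
Qed.

Lemma sumU r : A (r * m) (U r) <= r%:R * (A m z + L * (4 * eps)).
Proof.
elim: r => [|r IH]; first by rewrite mul0n mul0r /birkhoff big_geq.
rewrite mulSn A_add iterU.
have := blockU r; rewrite -nat1r; lra.
Qed.

Lemma UB_n n : A n x <= n%:R * (A m z + L * (4 * eps)) + L
   + L * (n%:R * (2 ^+ n * (3 * eps))).
Proof.
have e0 : 0 < eps := le_lt_trans (dX_ge0 _ _) hz1.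
apply: le_trans (A_lip n x (U n) hL) _.
have h1 : \sum_(0 <= i < n) dX (iter i sh x) (iter i sh (U n)) <= n%:R * (2 ^+ n * (3 * eps)).
  rewrite mulr_natl -[in X in _ <= X](subn0 n) -sumr_const_nat; apply: ler_sum_nat => i /andP[_ hi].
  apply: le_trans (dX_iter i x (U n)) _.
  apply: ler_pM; rewrite ?exprn_ge0 ?dX_ge0 //.
    by rewrite ler_eXn2l ?ltr1n // subn0 ltnW.
  by rewrite dX_sym DU.
have h2 : A n (U n) <= A (n * m) (U n) + L.
  have hnm : (n <= n * m)%N by rewrite leq_pmulr.
  rewrite -[in A (n * m) _](subnKC hnm) A_add.
  have := LB (n * m - n) (iter n sh (U n)); lra.
have h3 := sumU n.
have h4 : L * \sum_(0 <= i < n) dX (iter i sh x) (iter i sh (U n)) <= L * (n%:R * (2 ^+ n * (3 * eps))).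
  by rewrite ler_wpM2l.
lra.
Qed.
End UB.

Lemma arith (R : realType) (n : nat) (L q : R) : 0 <= L ->
  q < (n%:R + 1)^-1 ->
  n%:R * (q + L * (4 * (8 * (n%:R + 1) * 2 ^+ n)^-1)) + L + L * (n%:R * (2 ^+ n * (3 * (8 * (n%:R + 1) * 2 ^+ n)^-1))) <= 1 + 3 * L.
Proof.
move=> L0 hq; set eps := (8 * _ * _)^-1.
set nu := n%:R; set t := 2 ^+ n : R.
have nu0 : 0 <= nu by rewrite /nu ler0n.
have t1 : 1 <= t by rewrite /t exprn_ege1 // ler1n.
have K1 : 0 < 8 * (nu + 1) by lra.
have K0 : 0 < 8 * (nu + 1) * t by apply: mulr_gt0 => //; lra.
have e0 : 0 < eps by rewrite /eps invr_gt0.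
have hK : eps * (8 * (nu + 1) * t) = 1 by rewrite /eps mulVf // gt_eqF.
have d0 : 0 < nu + 1 by lra.
have hd : (nu + 1)^-1 * (nu + 1) = 1 by rewrite mulVf // gt_eqF.
have F1 : nu * q <= 1.
  have : nu * q <= nu * (nu + 1)^-1 by rewrite ler_wpM2l // ltW.
  have : 0 < (nu + 1)^-1 by rewrite invr_gt0.
  nra.
have F2 : nu * eps <= 1 / 8 by nra.
have F3 : nu * (t * (3 * eps)) <= 3 / 8 by nra.
nra.
Qed.

End Helpers.
Import Helpers.
Unset Implicit Arguments.

Theorem proposition2p9 (R : realType) (phi : Xsp R -> R)
  (phi_lip : exists L : R, forall x y : Xsp R, `|phi x - phi y| <= L * dX x y)
  (x : Xsp R) (hx : aubry phi x) :
  exists M : R, forall n : nat,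
    `|\sum_(0 <= i < n) (phi (iter i (@sshift R) x) - alpha phi)| <= M.
Proof.
have [L L0 hL] : exists2 L : R, 0 <= L & forall x y : Xsp R, `|phi x - phi y| <= L * dX x y.
  case: phi_lip => L' hL'; exists (Num.max L' 0); first by rewrite le_max lexx orbT.
  move=> a b; apply: le_trans (hL' a b) _; apply: ler_wpM2r; first exact: dX_ge0.
  by rewrite le_max lexx.
have [e0 e0p he0] := @aubry_ge R phi x hx.
have hlow : forall m z, (0 < m)%N -> dX x z < e0 -> dX (iter m (@sshift R) z) x < e0 ->
    -1 <= birkhoff phi m z.
  move=> m z m0 h1 h2; rewrite -lee_fin; apply: le_trans he0 _.
  by apply: ereal_inf_lbound; exists (m, z).
have LB := LB_all L0 hL hlow e0p.
exists (1 + 3 * L) => n.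
change (`|birkhoff phi n x| <= 1 + 3 * L).
rewrite ler_norml; apply/andP; split; first by have := LB n x; lra.
set eps := (8 * (n%:R + 1) * 2 ^+ n)^-1 : R.
have ep : 0 < eps.
  rewrite /eps invr_gt0; apply: mulr_gt0; last by rewrite exprn_gt0.
  by apply: mulr_gt0 => //; rewrite ltr_wpDl ?ler0n.
have dp : 0 < (n%:R + 1)^-1 :> R by rewrite invr_gt0 ltr_wpDl ?ler0n.
have hf := @aubry_le0 R phi x hx eps ep.
have : (fe R phi x eps < ((n%:R + 1)^-1)%:E)%E.
  by apply: le_lt_trans hf _; rewrite lte_fin.
move=> /ereal_inf_lt [_ [[m z] /= [m0 [h1 h2]] <-]].
rewrite lte_fin => hq.
apply: le_trans (UB_n L0 hL LB m0 h1 h2 n) _.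
exact: arith.
Qed.
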